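(* Consider a power network with $N$ buses and $n$ generators (synchronous or converter-based), $n \le N$, each generator connected to a distinct bus. Let $\mathbf{B}_{\mathrm{BB}} \in \mathbb{R}^{N\times N}$ and $\mathbf{B}_{\mathrm{BG}} \in \mathbb{R}^{N\times n}$ be as described in the context, and suppose the bus frequency variations $\Delta\boldsymbol{\omega}_B(t)\in\mathbb{R}^N$ and generator rotor speed deviations $\Delta\boldsymbol{\omega}_G(t)\in\mathbb{R}^n$ satisfy, for all $t \ge 0$, $$\Delta\boldsymbol{\omega}_B(t) = -\mathbf{B}_{\mathrm{BB}}^{+}\,\mathbf{B}_{\mathrm{BG}}\,\Delta\boldsymbol{\omega}_G(t).$$ Suppose the generator connected to the $i$-th network bus is the one inducing forced oscillations, i.e. the rotor speed deviations of all other generators are identically zero. Then for all $t\ge 0$ and all $j \in \{1,\ldots,N\}$ with $j \ne i$, $$|\Delta\boldsymbol{\omega}_{B,i}(t)| \ge |\Delta\boldsymbol{\omega}_{B,j}(t)|,$$ where $\Delta\boldsymbol{\omega}_{B,k}(t)$ denotes the $k$-th component of $\Delta\boldsymbol{\omega}_B(t)$.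
   Context: This is the noise-free ''frequency divider'' model of bus frequencies. $\mathbf{H}^+$ denotes the Moore–Penrose pseudo-inverse of a matrix $\mathbf{H}$. $\mathbf{B}_{\mathrm{BB}} = \mathbf{B}_{\mathrm{BUS}} + \mathbf{B}_{\mathrm{GG}}$, where $\mathbf{B}_{\mathrm{BUS}}\in\mathbb{R}^{N\times N}$ is the imaginary part of the network admittance matrix and $\mathbf{B}_{\mathrm{GG}}\in\mathbb{R}^{N\times N}$ is diagonal with $(k,k)$ entry equal to the inverse of the internal reactance of the machine at bus $k$ if a machine is connected there and $0$ otherwise. $\mathbf{B}_{\mathrm{BG}}\in\mathbb{R}^{N\times n}$ encodes susceptances between generators and the buses they are connected to: the column of $\mathbf{B}_{\mathrm{BG}}$ corresponding to a generator connected to bus $k$ is zero except for a single strictly positive entry in row $k$. Standing facts assumed in the paper about $\mathbf{B}_{\mathrm{BB}}^+$: every entry is nonnegative, and it is diagonally dominant both row-wise and column-wise (the magnitude of each diagonal entry is at least the sum of the magnitudes of the other entries in its row, and likewise in its column). *)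

(* Defs.v *)
From HB Require Import structures.
From mathcomp Require Import all_boot all_order all_algebra.
From mathcomp Require Export reals.
Set Implicit Arguments. Unset Strict Implicit. Unset Printing Implicit Defensive.
Import Order.TTheory GRing.Theory Num.Theory.
Local Open Scope ring_scope.

Definition is_MP_pinv (R : realType) (m n : nat)
  (A : 'M[R]_(m, n)) (X : 'M[R]_(n, m)) : Prop :=
  [/\ A *m X *m A = A, X *m A *m X = X,
      (A *m X)^T = A *m X & (X *m A)^T = X *m A].

Definition entrywise_nonneg (R : realType) (m n : nat) (A : 'M[R]_(m, n)) : Prop :=
  forall i j, 0 <= A i j.

Definition row_diag_dominant (R : realType) (N : nat) (A : 'M[R]_N) : Prop :=
  forall i : 'I_N, \sum_(j < N | j != i) `|A i j| <= `|A i i|.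

Definition col_diag_dominant (R : realType) (N : nat) (A : 'M[R]_N) : Prop :=
  forall j : 'I_N, \sum_(i < N | i != j) `|A i j| <= `|A j j|.

Definition is_BGG (R : realType) (N n : nat) (gen : 'I_n -> 'I_N)
  (x : 'I_n -> R) (BGG : 'M[R]_N) : Prop :=
  forall k l : 'I_N,
    BGG k l = if k == l then
                (if [pick g | gen g == k] is Some g then (x g)^-1 else 0)
              else 0.

Definition is_BBG (R : realType) (N n : nat) (gen : 'I_n -> 'I_N)
  (BBG : 'M[R]_(N, n)) : Prop :=
  forall (k : 'I_N) (g : 'I_n),
    (k == gen g -> 0 < BBG k g) /\ (k != gen g -> BBG k g = 0).

(* Main.v *)
Require Import Defs.
From HB Require Import structures.
From mathcomp Require Import all_boot all_order all_algebra.
From mathcomp Require Import reals.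
Import Order.TTheory GRing.Theory Num.Theory.
Local Open Scope ring_scope.

Theorem proposition1 (R : realType) (N n : nat)
  (gen : 'I_n -> 'I_N) (x : 'I_n -> R)
  (BBUS BGG BBB Bp : 'M[R]_N) (BBG : 'M[R]_(N, n))
  (wB : R -> 'cV[R]_N) (wG : R -> 'cV[R]_n) (i : 'I_N) :
  (n <= N)%N ->
  injective gen ->
  (forall g, 0 < x g) ->
  is_BGG gen x BGG ->
  BBB = BBUS + BGG ->
  is_BBG gen BBG ->
  is_MP_pinv BBB Bp ->
  entrywise_nonneg Bp ->
  row_diag_dominant Bp ->
  col_diag_dominant Bp ->
  (forall t, 0 <= t -> wB t = - (Bp *m BBG *m wG t)) ->
  (exists g : 'I_n, gen g = i /\
     forall g' : 'I_n, g' != g -> forall t, 0 <= t -> wG t g' 0 = 0) ->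
  forall t, 0 <= t -> forall j : 'I_N, j != i ->
    `|wB t j 0| <= `|wB t i 0|.
Proof.
move=> _ _ _ _ _ hBG _ _ _ hcol hw [g0 [hg0 hz]] t t0 j hji.
set c := BBG i g0 * wG t g0 0.
have key : forall k, wB t k 0 = - (Bp k i * c).
  move=> k; rewrite hw // !mxE.
  rewrite (bigD1 g0) //= big1 ?addr0; last first.
    by move=> g /hz ->; rewrite // mulr0.
  rewrite !mxE (bigD1 i) //= big1 ?addr0; last first.
    move=> m hm; have [_ ->] := hBG m g0; first by rewrite mulr0.
    by rewrite hg0.
  by rewrite /c mulrA.
rewrite !key !normrN !normrM ler_wpM2r //; first by rewrite mulr_ge0.
apply: le_trans (hcol i).
rewrite (bigD1 j) //= lerDl; apply: sumr_ge0 => k _; exact: normr_ge0.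
Qed.
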